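(* Any cycle graph on $n\ge3$ nodes is reachable (observable) from any two adjacent nodes $i$ and $(i\bmod n)+1$.
   Context: The cycle graph on nodes $\{1,\dots,n\}$ has edges $\{i,(i\bmod n)+1\}$; its Laplacian $L$ has $2$ on the diagonal and $-1$ in entries $(i,j)$ with $j\equiv i\pm1\pmod n$. Reachable from a set $\{i_1,i_2\}$ means that $(L,B)$ with $B=[e_{i_1}|e_{i_2}]$ is reachable (reachability matrix has rank $n$); observable means $(L,B^T)$ is observable. *)

(* Defs.v *)
From HB Require Import structures.
From mathcomp Require Import all_boot all_order all_algebra.
Set Implicit Arguments. Unset Strict Implicit. Unset Printing Implicit Defensive.
Import Order.TTheory GRing.Theory Num.Theory.
Local Open Scope ring_scope.

(* Nodes {1,...,n} are represented by 'I_n = {0,...,n-1} (node k+1 <-> k).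
   The cycle edge {i, (i mod n)+1} becomes {k, (k+1) mod n}. *)

Definition cycle_laplacian (R : pzRingType) (n : nat) : 'M[R]_n :=
  \matrix_(i < n, j < n)
    if i == j then 2%:R
    else if (val j == (val i).+1 %% n)%N || (val i == (val j).+1 %% n)%N
         then -1 else 0.

Definition input2 (R : pzRingType) (n : nat) (i1 i2 : 'I_n) : 'M[R]_(n, 2) :=
  \matrix_(r < n, c < 2) if c == ord0 then (r == i1)%:R else (r == i2)%:R.

Definition reach_mx (R : pzRingType) (n m : nat) (A : 'M[R]_n) (B : 'M[R]_(n, m)) :=
  \mxrow_(k < n) (A ^+ k *m B).

Definition obs_mx (R : pzRingType) (n p : nat) (A : 'M[R]_n) (C : 'M[R]_(p, n)) :=
  \mxcol_(k < n) (C *m A ^+ k).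

Definition reachable (F : fieldType) (n m : nat) (A : 'M[F]_n) (B : 'M[F]_(n, m)) :=
  \rank (reach_mx A B) = n.

Definition observable (F : fieldType) (n p : nat) (A : 'M[F]_n) (C : 'M[F]_(p, n)) :=
  \rank (obs_mx A C) = n.

(* Main.v *)
Require Import Defs.
From HB Require Import structures.
From mathcomp Require Import all_boot all_order all_algebra.
From mathcomp Require Import zify.
Import Order.TTheory GRing.Theory Num.Theory.
Local Open Scope ring_scope.

Section Krylov.
Variables (F : fieldType) (n p : nat) (L : 'M[F]_n) (C : 'M[F]_(p, n)).

Definition W (m : nat) : 'M[F]_n := (\sum_(t < m.+1) <<C *m L ^+ t>>)%MS.

Lemma W_mono m : (W m <= W m.+1)%MS.
Proof.
apply/sumsmx_subP => t _.
exact: (sumsmx_sup (widen_ord (leqnSn _) t)).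
Qed.

Lemma W_step m (v : 'rV[F]_n) : (v <= W m)%MS -> (v *m L <= W m.+1)%MS.
Proof.
move/sub_sums_genmxP=> [u ->]; rewrite mulmx_suml.
apply: summx_sub => t _; rewrite -!mulmxA (_ : L ^+ t *m L = L ^+ t.+1); last by rewrite exprSr mulmxE.
have ht : (t.+1 < m.+2)%N by rewrite ltnS ltn_ord.
apply: (sumsmx_sup (Ordinal ht)) => //.
by rewrite genmxE; apply: submxMl.
Qed.

Lemma W_C : (C <= W 0)%MS.
Proof.
apply: (sumsmx_sup ord0) => //.
by rewrite genmxE expr0 mulmx1.
Qed.

Lemma W_obs m : (m < n)%N -> (W m <= obs_mx L C)%MS.
Proof.
move=> hm; apply/sumsmx_subP => t _; rewrite genmxE /obs_mx.
rewrite (eqmx_col (fun k : 'I_n => C *m L ^+ k)).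
have ht : (t < n)%N by apply: leq_trans (ltn_ord t) hm.
apply: (sumsmx_sup (Ordinal ht)) => //.
by rewrite genmxE.
Qed.

End Krylov.
Arguments W {F n p} L C m.
Arguments W_mono {F n p} L C m.
Arguments W_step {F n p} L C m v.
Arguments W_C {F n p} L C.
Arguments W_obs {F n p} L C m.

Lemma modS (x m : nat) : (x < m)%N -> (x.+1 %% m = if x.+1 == m then 0 else x.+1)%N.
Proof.
move=> h; case: eqP => [->|ne]; first by rewrite modnn.
by rewrite modn_small //; rewrite ltn_neqAle h andbT; apply/eqP.
Qed.

Lemma ordS_neq (n : nat) (k : 'I_n) : (2 <= n)%N -> ordS k != k.
Proof.
move=> hn; apply/eqP => /(congr1 val) /=; rewrite modS //.
have := ltn_ord k; case: eqP => [/eqP|]; lia.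
Qed.

Lemma ordSS_neq (n : nat) (k : 'I_n) : (3 <= n)%N -> ordS (ordS k) != k.
Proof.
move=> hn; apply/eqP => /(congr1 val) /=; rewrite (@modS _ _ (ltn_ord k)).
have := ltn_ord k; case: eqP => e hk.
  rewrite modS; last lia. case: eqP; lia.
rewrite modS; last lia. case: eqP; lia.
Qed.

Lemma cyc_row (R : pzRingType) (n : nat) (hn : (3 <= n)%N) (k : 'I_n) :
  (delta_mx 0 k : 'rV[R]_n) *m cycle_laplacian R n =
  2%:R *: delta_mx 0 k - delta_mx 0 (ordS k) - delta_mx 0 (ord_pred k).
Proof.
rewrite -rowE; apply/rowP => c; rewrite !mxE /=.
have e1 : (val c == (val k).+1 %% n)%N = (ordS k == c).
  by rewrite eq_sym.
have e2 : (val k == (val c).+1 %% n)%N = (ord_pred k == c).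
  apply/idP/idP => [/eqP h | /eqP <-].
    have -> : k = ordS c by apply: val_inj.
    by rewrite ordSK.
  by have := ord_predK k => /(congr1 val) /= ->.
rewrite e1 e2 (eq_sym c k) (eq_sym c (ordS k)) (eq_sym c (ord_pred k)).
have n1 : ordS k != k by apply: ordS_neq; lia.
have n2 : ord_pred k != k.
  apply/eqP => h; have := ord_predK k; rewrite h => /eqP; by rewrite (negPf n1).
have n3 : ordS k != ord_pred k.
  apply/eqP => h; have := @ordSS_neq _ k hn; by rewrite h ord_predK eqxx.
case: (k =P c) => [<-|/eqP nkc].
  by rewrite (negPf n1) (negPf n2) /= !subr0 mulr1.
rewrite /= mulr0 sub0r.
case: (ordS k =P c) => [<-|/eqP nac].
  by rewrite eq_sym (negPf n3) /= subr0.
case: (ord_pred k =P c) => /= _.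
  by rewrite oppr0 sub0r.
by rewrite !mulr0n oppr0 addr0.
Qed.

Lemma submxB_ (F : fieldType) m1 m2 n (A B : 'M[F]_(m1, n)) (C : 'M[F]_(m2, n)) :
  (A <= C)%MS -> (B <= C)%MS -> ((A - B)%R <= C)%MS.
Proof. by move=> hA hB; apply: addmx_sub => //; rewrite eqmx_opp. Qed.

Section Cycle.
Variables (R : fieldType) (n : nat) (hn : (3 <= n)%N) (i j : 'I_n)
  (hij : val j = ((val i).+1 %% n)%N).

Let L := cycle_laplacian R n.
Let C : 'M[R]_(2, n) := (input2 R i j)^T.
Let s m := iter m (@ordS n) i.
Let d (k : 'I_n) : 'rV[R]_n := delta_mx 0 k.

Lemma key m : (d (s m) <= W L C m)%MS /\ (d (s m.+1) <= W L C m)%MS.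
Proof.
elim: m => [|m [IH1 IH2]].
  have hj : s 1 = j by apply: val_inj; rewrite /= hij.
  rewrite hj; split; apply: submx_trans (W_C L C).
    have -> : d (s 0) = row 0 C by apply/rowP => c; rewrite !mxE /= eq_sym.
    exact: row_sub.
  have -> : d j = row 1 C by apply/rowP => c; rewrite !mxE /= eq_sym.
  exact: row_sub.
split; first by apply: submx_trans (W_mono _ _ _).
have e := @cyc_row R n hn (s m.+1).
have hp : ord_pred (s m.+1) = s m by rewrite /= ordSK.
rewrite hp in e.
have -> : d (s m.+2) = 2%:R *: d (s m.+1) - d (s m) - d (s m.+1) *m L.
  rewrite /d /L e; rewrite /=. 
  by rewrite opprB -addrA addKr opprB addrC subrK.
apply: submxB_; last exact: W_step.
apply: submxB_; last exact: submx_trans IH1 (W_mono _ _ _).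
apply: scalemx_sub; exact: submx_trans IH2 (W_mono _ _ _).
Qed.

Lemma all_in (k : 'I_n) : exists2 m, (m < n)%N & s m = k.
Proof.
have vs : forall m, val (s m) = ((i + m) %% n)%N.
  elim=> [|m IH] /=; first by rewrite addn0 modn_small.
  by rewrite IH -addn1 modnDml addn1 addnS.
exists ((k + (n - i)) %% n)%N; first by rewrite ltn_mod; lia.
apply: val_inj; rewrite vs modnDmr.
have -> : (i + (k + (n - i)) = k + n)%N by have := ltn_ord i; lia.
by rewrite modnDr modn_small.
Qed.

Lemma obs_rank : \rank (obs_mx L C) = n.
Proof.
apply/eqP; rewrite eqn_leq rank_leq_col /=.
rewrite -{1}(mxrank1 R n); apply: mxrankS; apply/row_subP => k.
rewrite row1; have [m hm <-] := all_in k.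
have [h _] := key m.
apply: submx_trans h _; exact: W_obs.
Qed.

End Cycle.

Lemma lap_sym (R : fieldType) n : (cycle_laplacian R n)^T = cycle_laplacian R n.
Proof. by apply/matrixP => a b; rewrite !mxE (eq_sym b a) orbC. Qed.

Lemma lap_exp_sym (R : fieldType) n k :
  (cycle_laplacian R n ^+ k)^T = cycle_laplacian R n ^+ k.
Proof.
elim: k => [|k IH]; first by rewrite !expr0 trmx1.
rewrite exprS; change ((cycle_laplacian R n *m cycle_laplacian R n ^+ k)^T = cycle_laplacian R n * cycle_laplacian R n ^+ k).
rewrite trmx_mul IH lap_sym; change (cycle_laplacian R n ^+ k * cycle_laplacian R n = cycle_laplacian R n * cycle_laplacian R n ^+ k).
by rewrite -exprSr exprS.
Qed.

Theorem mainTheorem10 (R : realFieldType) (n : nat) (hn : (3 <= n)%N)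
    (i j : 'I_n) (hij : val j = ((val i).+1 %% n)%N) :
  reachable (cycle_laplacian R n) (input2 R i j) /\
  observable (cycle_laplacian R n) (input2 R i j)^T.
Proof.
split; last exact: (obs_rank R n hn i j hij).
rewrite /reachable -mxrank_tr /reach_mx tr_mxrow.
rewrite -[RHS](obs_rank R n hn i j hij) /obs_mx; congr (\rank _).
by apply: eq_mxcol => k; rewrite trmx_mul lap_exp_sym.
Qed.
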